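(* For every symmetric instance with $n$ actions and $k$ signals ($2\le k\le n$) there exist a slope $s\in[-\infty,0]$ and an optimal scheme with $k$ signals that is direct, persuasive, recommends only actions in $[k]$, and whose recommendation points form an $s$-Pareto point collection $\mathcal P$ satisfying $u_{\mathcal S}(\mathcal P)\ge u_{\mathcal S}(\mathcal P')$ for every $s'\in[-\infty,0]$ and every $s'$-Pareto point collection $\mathcal P'$.
   Context: Model: a receiver chooses one of the actions $[n]$; each action $i$ has a type $\theta_i$; the state $\boldsymbol\theta=(\theta_1,\dots,\theta_n)$ is drawn from a commonly known distribution $q$ over a finite set of type vectors. Each type $t$ has receiver value $\rho(t)$ and sender value $\xi(t)$, received if the receiver takes an action of that type. A signaling scheme with $k$ signals maps each state to a distribution over $k$ signals; the sender commits to it, observes the state and sends a signal; the receiver picks an action maximizing her conditional expected utility given the signal, breaking ties in favor of the sender. $u_{\mathcal S},u_{\mathcal R}$ denote expected utilities; optimal means maximizing $u_{\mathcal S}$ among schemes with $k$ signals. Direct: each signal recommends an action; persuasive: for each signal sent with positive probability recommending $i$, $\mathbb E[\rho(\theta_i)\mid\sigma]\ge\mathbb E[\rho(\theta_j)\mid\sigma]$ for all $j$. $\rho_E=\max_{i\in[n]}\sum_{\boldsymbol\theta}q_{\boldsymbol\theta}\rho(\theta_i)$. Symmetric instance: $q_{\boldsymbol\theta}=q_{\boldsymbol\theta'}$ whenever $\boldsymbol\theta'$ is a permutation of $\boldsymbol\theta$; all actions share the type set $\Theta$, and (w.l.o.g.) the types in any state are pairwise distinct. Identify each type $c$ with the point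 $(\rho(c),\xi(c))\in\mathbb R^2$. For a $k$-element set $C$ of types let $q_C=\Pr[\{\theta_1,\dots,\theta_k\}=C]$. For $s\in(-\infty,0]$, a point $p$ of the convex hull $\mathrm{conv}(C)$ corresponds to slope $s$ if it maximizes $y-sx$ over $(x,y)\in\mathrm{conv}(C)$; it corresponds to slope $-\infty$ if it maximizes $x$ (first coordinate) over $\mathrm{conv}(C)$. The Pareto frontier of $C$ is the set of points of $\mathrm{conv}(C)$ corresponding to some slope in $[-\infty,0]$. A point collection $\mathcal P$ assigns to each $C$ with $q_C>0$ a point $p(C)=(p_{\mathcal R}(C),p_{\mathcal S}(C))\in\mathrm{conv}(C)$; $u_{\mathcal S}(\mathcal P)=\sum_C q_Cp_{\mathcal S}(C)$ and $u_{\mathcal R}(\mathcal P)=\sum_Cq_Cp_{\mathcal R}(C)$. For $s\in[-\infty,0]$, $\mathcal P$ is $s$-Pareto if (1) for every $C$, $p(C)$ corresponds to slope $s$ (in particular lies on the Pareto frontier of $C$), and (2) $u_{\mathcal R}(\mathcal P)\ge\rho_E$. For a direct scheme recommending only actions in $[k]$, its recommendation point for $C$ is $(\mathbb E[\rho(\theta_\sigma)\mid \{\theta_1,\dots,\theta_k\}=C],\ \mathbb E[\xi(\theta_\sigma)\mid\{\theta_1,\dots,\theta_k\}=C])$, where $\sigma$ is the recommended action; these points form a point collection. *)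

(* Defs.v *)
From HB Require Import structures.
From mathcomp Require Import all_boot all_order all_algebra all_fingroup.
From mathcomp Require Import reals.
Set Implicit Arguments. Unset Strict Implicit. Unset Printing Implicit Defensive.
Import Order.TTheory GRing.Theory Num.Theory.
Local Open Scope ring_scope.

Section Persuasion.
Variables (R : realType) (T : finType) (n k : nat).
Variables (rho xi : T -> R).

(* a state is a type vector (theta_1, ..., theta_n) *)
Notation state := {ffun 'I_n -> T}.
Variable q : state -> R.

Definition is_distribution := (forall th, 0 <= q th) /\ \sum_th q th = 1.

Definition symmetric_q :=
  forall (th : state) (pi : {perm 'I_n}), q [ffun i => th (pi i)] = q th.

Definition distinct_types := forall th : state, 0 < q th -> injective th.

(* a signaling scheme with k signals: phi th sg = Pr[signal sg | state th] *)
Definition is_scheme (phi : state -> 'I_k -> R) :=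
  forall th, (forall sg, 0 <= phi th sg) /\ \sum_sg phi th sg = 1.

Definition Psig (phi : state -> 'I_k -> R) (sg : 'I_k) := \sum_th q th * phi th sg.

Definition condE (phi : state -> 'I_k -> R) (sg : 'I_k) (f : state -> R) :=
  (\sum_th q th * phi th sg * f th) / Psig phi sg.

Definition receiver_best (phi : state -> 'I_k -> R) (a : 'I_k -> 'I_n) :=
  forall sg,
    (forall j, condE phi sg (fun th => rho (th j)) <= condE phi sg (fun th => rho (th (a sg))))
    /\ (forall j, (forall l, condE phi sg (fun th => rho (th l))
                             <= condE phi sg (fun th => rho (th j))) ->
         condE phi sg (fun th => xi (th j)) <= condE phi sg (fun th => xi (th (a sg)))).

Definition uS_scheme (phi : state -> 'I_k -> R) (a : 'I_k -> 'I_n) :=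
  \sum_sg Psig phi sg * condE phi sg (fun th => xi (th (a sg))).

Definition optimal_scheme (phi : state -> 'I_k -> R) :=
  is_scheme phi /\
  exists a, receiver_best phi a /\
    forall phi' a', is_scheme phi' -> receiver_best phi' a' ->
      uS_scheme phi' a' <= uS_scheme phi a.

(* direct scheme: signal sg recommends action rec sg; persuasive *)
Definition persuasive (phi : state -> 'I_k -> R) (rec : 'I_k -> 'I_n) :=
  forall sg, 0 < Psig phi sg -> forall j,
    condE phi sg (fun th => rho (th j)) <= condE phi sg (fun th => rho (th (rec sg))).

(* rho_E bound: u_R >= max_i E[rho(theta_i)], written as >= every E[rho(theta_i)] *)
Definition ge_rhoE (x : R) := forall i : 'I_n, \sum_th q th * rho (th i) <= x.

Definition firstk (th : state) : {set T} := [set th i | i : 'I_n & (i < k)%N].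

Definition qC (C : {set T}) := \sum_(th | firstk th == C) q th.

Definition in_conv (C : {set T}) (p : R * R) :=
  exists lam : T -> R, (forall c, 0 <= lam c) /\ (forall c, c \notin C -> lam c = 0)
    /\ \sum_c lam c = 1
    /\ p = (\sum_c lam c * rho c, \sum_c lam c * xi c).

(* slopes in [-oo, 0]: None = -oo, Some s with s <= 0 *)
Definition slope_ok (s : option R) : Prop := if s is Some s0 then s0 <= 0 else True.

Definition slope_obj (s : option R) (p : R * R) :=
  if s is Some s0 then p.2 - s0 * p.1 else p.1.

Definition corresponds (C : {set T}) (s : option R) (p : R * R) :=
  in_conv C p /\ forall z, in_conv C z -> slope_obj s z <= slope_obj s p.

(* point collections: P C meaningful for qC C > 0 *)
Definition uS_pc (P : {set T} -> R * R) := \sum_(C | 0 < qC C) qC C * (P C).2.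
Definition uR_pc (P : {set T} -> R * R) := \sum_(C | 0 < qC C) qC C * (P C).1.

Definition point_collection (P : {set T} -> R * R) :=
  forall C, 0 < qC C -> in_conv C (P C).

Definition s_pareto (s : option R) (P : {set T} -> R * R) :=
  point_collection P /\
  (forall C, 0 < qC C -> corresponds C s (P C)) /\ ge_rhoE (uR_pc P).

Definition rec_points (phi : state -> 'I_k -> R) (rec : 'I_k -> 'I_n) (C : {set T}) : R * R :=
  ((\sum_(th | firstk th == C) \sum_sg q th * phi th sg * rho (th (rec sg))) / qC C,
   (\sum_(th | firstk th == C) \sum_sg q th * phi th sg * xi (th (rec sg))) / qC C).

End Persuasion.

(* Main.v *)
Require Import Defs.
From HB Require Import structures.
From mathcomp Require Import all_boot all_order all_algebra all_fingroup.
From mathcomp Require Import reals.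
From mathcomp Require Import ring lra.
Import Order.TTheory GRing.Theory Num.Theory.
Local Open Scope ring_scope.

Lemma ex_max (R : realType) (K : finType) (P : pred K) (f : K -> R) (x0 : K) :
  P x0 -> exists c, P c /\ forall d, P d -> f d <= f c.
Proof. by move=> Px0; case: (arg_maxP f Px0) => c Pc H; exists c; split=> // d Pd; exact: H. Qed.

Lemma ex_min (R : realType) (K : finType) (P : pred K) (f : K -> R) (x0 : K) :
  P x0 -> exists c, P c /\ forall d, P d -> f c <= f d.
Proof.
move=> /(@ex_max R K P (fun x => - f x)) [c [Pc H]]; exists c; split=> // d Pd.
by rewrite -lerN2 H.
Qed.

Section Main.
Variables (R : realType) (T : finType) (n k : nat) (rho xi : T -> R).
Variable (q : {ffun 'I_n -> T} -> R).
Hypotheses (Hk : (2 <= k)%N) (Hkn : (k <= n)%N).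
Hypotheses (Hd : is_distribution q) (Hs : symmetric_q q) (Hinj : distinct_types q).
Variable t0 : T.

Notation state := {ffun 'I_n -> T}.

Lemma q_ge0 th : 0 <= q th. Proof. by case: Hd. Qed.

Lemma k_gt0 : (0 < k)%N. Proof. exact: leq_trans Hk. Qed.
Definition rec (i : 'I_k) : 'I_n := widen_ord Hkn i.
Definition o0 : 'I_k := Ordinal k_gt0.
Definition i0 : 'I_n := rec o0.

Lemma rec_inj : injective rec.
Proof. by move=> a b /(congr1 val) /= /val_inj. Qed.

Lemma qC_ge0 C : 0 <= qC k q C.
Proof. by apply: sumr_ge0 => th _; exact: q_ge0. Qed.

Lemma sumC (F : {set T} -> R) :
  \sum_(C | 0 < qC k q C) qC k q C * F C = \sum_th q th * F (firstk k th).
Proof.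
rewrite (partition_big (firstk k) predT) //=.
have E1 : forall C, \sum_(th | firstk k th == C) q th * F (firstk k th) = qC k q C * F C.
  move=> C; rewrite /qC big_distrl /=; apply: eq_bigr => th /eqP -> //.
rewrite (eq_bigr _ (fun C _ => E1 C)).
rewrite [RHS](bigID (fun C => 0 < qC k q C)) /=.
rewrite [X in _ = _ + X]big1 ?addr0 // => C HC.
have -> : qC k q C = 0 by apply/eqP; rewrite eq_le qC_ge0 andbT leNgt.
by rewrite mul0r.
Qed.

Lemma rec_in (th : state) i : th (rec i) \in firstk k th.
Proof. by apply/imsetP; exists (rec i) => //; rewrite inE /= ltn_ord. Qed.

Lemma i0_in (th : state) : th i0 \in firstk k th.
Proof. exact: rec_in. Qed.

Lemma firstk_rec (th : state) c : c \in firstk k th -> exists i : 'I_k, th (rec i) = c.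
Proof.
case/imsetP=> i; rewrite inE /= => Hi ->.
by exists (Ordinal Hi); congr (th _); apply: val_inj.
Qed.

Definition g (l : R) c := xi c + l * rho c.

Definition hiP l (C : {set T}) c := [&& c \in C, [forall d in C, g l d <= g l c] &
  [forall d in C, (g l d == g l c) ==> (rho d <= rho c)]].
Definition loP l (C : {set T}) c := [&& c \in C, [forall d in C, g l d <= g l c] &
  [forall d in C, (g l d == g l c) ==> (rho c <= rho d)]].
Definition hi l C := odflt t0 [pick c | hiP l C c].
Definition lo l C := odflt t0 [pick c | loP l C c].

Lemma hi_spec l (C : {set T}) x : x \in C -> hiP l C (hi l C).
Proof.
move=> xC.
have [c1 [c1C Hc1]] := @ex_max R T (mem C) (g l) x xC.
have Pc1 : (c1 \in C) && (g l c1 == g l c1) by rewrite eqxx andbT; exact: c1C.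
have [c2 [/andP[c2C /eqP e2] Hc2]] :=
  @ex_max R T (fun d => (d \in C) && (g l d == g l c1)) rho c1 Pc1.
have H : hiP l C c2.
  apply/and3P; split=> //.
    by apply/forall_inP => d dC; rewrite e2; exact: Hc1.
  apply/forall_inP => d dC; apply/implyP => /eqP ed; apply: Hc2.
  by rewrite dC ed e2 eqxx.
rewrite /hi; case: pickP => [c //|/(_ c2)]; by rewrite H.
Qed.

Lemma lo_spec l (C : {set T}) x : x \in C -> loP l C (lo l C).
Proof.
move=> xC.
have [c1 [c1C Hc1]] := @ex_max R T (mem C) (g l) x xC.
have Pc1 : (c1 \in C) && (g l c1 == g l c1) by rewrite eqxx andbT; exact: c1C.
have [c2 [/andP[c2C /eqP e2] Hc2]] :=
  @ex_min R T (fun d => (d \in C) && (g l d == g l c1)) rho c1 Pc1.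
have H : loP l C c2.
  apply/and3P; split=> //.
    by apply/forall_inP => d dC; rewrite e2; exact: Hc1.
  apply/forall_inP => d dC; apply/implyP => /eqP ed; apply: Hc2.
  by rewrite dC ed e2 eqxx.
rewrite /lo; case: pickP => [c //|/(_ c2)]; by rewrite H.
Qed.

Lemma hiP_in l (C : {set T}) c : hiP l C c -> c \in C. Proof. by case/and3P. Qed.
Lemma hiP_max l (C : {set T}) c : hiP l C c -> forall d, d \in C -> g l d <= g l c.
Proof. by case/and3P=> _ /forall_inP H _. Qed.
Lemma hiP_tie l (C : {set T}) c : hiP l C c -> forall d, d \in C -> g l d = g l c -> rho d <= rho c.
Proof. by case/and3P=> _ _ /forall_inP H d dC e; move: (H d dC); rewrite e eqxx. Qed.
Lemma loP_in l (C : {set T}) c : loP l C c -> c \in C. Proof. by case/and3P. Qed.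
Lemma loP_max l (C : {set T}) c : loP l C c -> forall d, d \in C -> g l d <= g l c.
Proof. by case/and3P=> _ /forall_inP H _. Qed.
Lemma loP_tie l (C : {set T}) c : loP l C c -> forall d, d \in C -> g l d = g l c -> rho c <= rho d.
Proof. by case/and3P=> _ _ /forall_inP H d dC e; move: (H d dC); rewrite e eqxx. Qed.

Arguments hiP_in {l C c}. Arguments hiP_max {l C c}. Arguments hiP_tie {l C c}.
Arguments loP_in {l C c}. Arguments loP_max {l C c}. Arguments loP_tie {l C c}.

Definition Hi l := \sum_th q th * rho (hi l (firstk k th)).
Definition Lo l := \sum_th q th * rho (lo l (firstk k th)).
Definition E := \sum_th q th * rho (th i0).

Definition bp (p : T * T) := (xi p.2 - xi p.1) / (rho p.1 - rho p.2).
Definition big := 1 + \sum_p `|bp p|.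
Definition cand (o : option (T * T)) := if o is Some p then Num.max 0 (bp p) else big.

Lemma big_gt0 : 0 < big.
Proof.
rewrite /big; have : 0 <= \sum_p `|bp p| by apply: sumr_ge0 => *; exact: normr_ge0.
lra.
Qed.

Lemma cand_ge0 o : 0 <= cand o.
Proof. by case: o => [p|] /=; [rewrite le_max lexx | exact: ltW big_gt0]. Qed.

Lemma bp_swap c d : rho c < rho d -> bp (c, d) = (xi c - xi d) / (rho d - rho c).
Proof.
move=> _; rewrite /bp /= -[xi d - xi c]opprB -[rho c - rho d]opprB.
by rewrite invrN mulrNN.
Qed.

Lemma bp_le_big p : bp p < big.
Proof.
rewrite /big (bigD1 p) //=.
have : 0 <= \sum_(i | i != p) `|bp i| by apply: sumr_ge0 => *; exact: normr_ge0.
have := ler_norm (bp p); lra.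
Qed.

Lemma hi_big_max (C : {set T}) d : d \in C -> rho d <= rho (hi big C).
Proof.
move=> dC; have H := @hi_spec big C d dC; set h := hi big C in H *.
rewrite leNgt; apply/negP => Hlt.
have hm := hiP_max H d dC; rewrite /g in hm.
have D0 : 0 < rho d - rho h by rewrite subr_gt0.
have : big <= bp (h, d).
  rewrite bp_swap // ler_pdivlMr //.
  have -> : big * (rho d - rho h) = big * rho d - big * rho h by ring.
  lra.
have := bp_le_big (h, d); lra.
Qed.

Lemma Hi_big : E <= Hi big.
Proof.
apply: ler_sum => th _; apply: ler_wpM2l; first exact: q_ge0.
exact: hi_big_max (i0_in th).
Qed.

Lemma cross l0 l1 (C : {set T}) x : 0 <= l0 -> l0 < l1 ->
  (forall o, ~~ ((l0 < cand o) && (cand o < l1))) -> x \in C ->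
  forall d, d \in C -> g l1 d <= g l1 (hi l0 C).
Proof.
move=> l0ge l01 Hno xC d dC; have H := @hi_spec l0 C x xC; set c := hi l0 C in H *.
have hm := hiP_max H d dC.
have ht := hiP_tie H d dC.
rewrite /g in hm ht *.
case: (leP (rho d) (rho c)) => Hr.
  have -> : xi d + l1 * rho d = xi d + l0 * rho d + (l1 - l0) * rho d by ring.
  have -> : xi c + l1 * rho c = xi c + l0 * rho c + (l1 - l0) * rho c by ring.
  have : (l1 - l0) * rho d <= (l1 - l0) * rho c.
    by apply: ler_wpM2l => //; rewrite subr_ge0 ltW.
  lra.
have Hsd : xi d + l0 * rho d < xi c + l0 * rho c.
  rewrite lt_neqAle hm andbT; apply/negP => /eqP e.
  by have := ht e; rewrite leNgt Hr.
have D0 : 0 < rho d - rho c by rewrite subr_gt0.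
have Hr0 : l0 < bp (c, d).
  rewrite bp_swap // ltr_pdivlMr //.
  have -> : l0 * (rho d - rho c) = l0 * rho d - l0 * rho c by ring.
  lra.
have Hc : cand (Some (c, d)) = bp (c, d).
  by rewrite /= max_r // ltW // (le_lt_trans l0ge Hr0).
have := Hno (Some (c, d)); rewrite Hc Hr0 /= -leNgt => Hl1.
move: Hl1; rewrite bp_swap // ler_pdivlMr //.
have -> : l1 * (rho d - rho c) = l1 * rho d - l1 * rho c by ring.
lra.
Qed.

Lemma Lo_le_Hi l0 l1 : 0 <= l0 -> l0 < l1 ->
  (forall o, ~~ ((l0 < cand o) && (cand o < l1))) -> Lo l1 <= Hi l0.
Proof.
move=> l0ge l01 Hno; apply: ler_sum => th _; apply: ler_wpM2l; first exact: q_ge0.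
set C := firstk k th.
have xC : th i0 \in C by exact: i0_in.
have Hl := @lo_spec l1 C _ xC; have Hh := @hi_spec l0 C _ xC.
have c0C := hiP_in Hh.
have e1 := loP_max Hl _ c0C.
have e2 := @cross l0 l1 C _ l0ge l01 Hno xC _ (loP_in Hl).
apply: (loP_tie Hl _ c0C); apply/eqP; rewrite eq_le e1 e2 //.
Qed.

Lemma mix (a b e : R) : a <= e -> e <= b -> exists t, [/\ 0 <= t, t <= 1 & (1 - t) * a + t * b = e].
Proof.
move=> ae eb; have [ab|ab] := eqVneq a b.
  by exists 1; split=> //; rewrite subrr mul0r add0r mul1r; apply/eqP; rewrite eq_le eb -ab ae.
have ab' : 0 < b - a by rewrite subr_gt0 lt_neqAle ab (le_trans ae eb).
exists ((e - a) / (b - a)); split.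
- by apply: divr_ge0; [rewrite subr_ge0 | exact: ltW].
- by rewrite ler_pdivrMr // mul1r lerD2r.
- have -> : (1 - (e - a) / (b - a)) * a + (e - a) / (b - a) * b
           = a + (e - a) / (b - a) * (b - a) by ring.
  by rewrite divfK ?gt_eqF //; ring.
Qed.

Lemma exists_lt : exists l t, [/\ 0 <= l, 0 <= t, t <= 1,
  E <= (1 - t) * Lo l + t * Hi l & l * ((1 - t) * Lo l + t * Hi l - E) = 0].
Proof.
have [ks [Eks Hks]] := @ex_min R _ (fun o => E <= Hi (cand o)) cand None Hi_big.
set l := cand ks.
have lge : 0 <= l by exact: cand_ge0.
have [l0|lpos] := eqVneq l 0.
  exists l, 1; split=> //; first by rewrite subrr mul0r add0r mul1r.
  by rewrite l0 mul0r.
have lgt : 0 < l by rewrite lt_neqAle eq_sym lpos lge.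
have Pw : cand (Some (t0, t0)) < l by rewrite /= /bp /= !subrr mul0r maxxx.
have [km [Pkm Hkm]] := @ex_max R _ (fun o => cand o < l) cand _ Pw.
set l0 := cand km in Pkm Hkm.
have Hno : forall o, ~~ ((l0 < cand o) && (cand o < l)).
  move=> o; apply/negP => /andP[h1 h2]; have := Hkm o h2; rewrite leNgt h1 //.
have HiE : Hi l0 < E.
  rewrite ltNge; apply/negP => h; have := Hks km h; rewrite leNgt Pkm //.
have LH := @Lo_le_Hi l0 l (cand_ge0 km) Pkm Hno.
have [t [t0' t1 te]] := @mix (Lo l) (Hi l) E (ltW (le_lt_trans LH HiE)) Eks.
exists l, t; split=> //; first by rewrite te.
by rewrite te subrr mulr0.
Qed.

Definition ix (th : state) (c : T) : 'I_k := odflt o0 [pick i | th (rec i) == c].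

Lemma ix_spec (th : state) c : c \in firstk k th -> th (rec (ix th c)) = c.
Proof.
case/firstk_rec => i Hi; rewrite /ix; case: pickP => [j /eqP //|/(_ i)].
by rewrite Hi eqxx.
Qed.

Lemma sum_ind (a : 'I_k) (F : 'I_k -> R) : \sum_sg (sg == a)%:R * F sg = F a.
Proof.
rewrite (bigD1 a) //= eqxx mul1r big1 ?addr0 // => i /negbTE ->.
by rewrite mul0r.
Qed.

Section Scheme.
Variables (l t : R).
Hypotheses (t_ge0 : 0 <= t) (t_le1 : t <= 1).

Definition loS (th : state) := lo l (firstk k th).
Definition hiS (th : state) := hi l (firstk k th).

Definition phi (th : state) (sg : 'I_k) :=
  (1 - t) * (sg == ix th (loS th))%:R + t * (sg == ix th (hiS th))%:R.

Definition Pt (C : {set T}) :=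
  ((1 - t) * rho (lo l C) + t * rho (hi l C), (1 - t) * xi (lo l C) + t * xi (hi l C)).

Lemma loS_in th : loS th \in firstk k th.
Proof. exact: loP_in (@lo_spec l _ _ (i0_in th)). Qed.
Lemma hiS_in th : hiS th \in firstk k th.
Proof. exact: hiP_in (@hi_spec l _ _ (i0_in th)). Qed.

Lemma phi_sum th (F : 'I_k -> R) :
  \sum_sg phi th sg * F sg = (1 - t) * F (ix th (loS th)) + t * F (ix th (hiS th)).
Proof.
rewrite /phi; under eq_bigr do rewrite mulrDl -!mulrA.
by rewrite big_split /= -!big_distrr /= !sum_ind.
Qed.

Lemma phi_rec th (f : T -> R) :
  \sum_sg phi th sg * f (th (rec sg)) = (1 - t) * f (loS th) + t * f (hiS th).
Proof. by rewrite phi_sum !ix_spec //; [exact: hiS_in | exact: loS_in]. Qed.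

Lemma phi_scheme : is_scheme phi.
Proof.
move=> th; split.
  move=> sg; rewrite /phi; apply: addr_ge0; apply: mulr_ge0 => //; rewrite ?subr_ge0 //.
rewrite -(eq_bigr _ (fun sg _ => mulr1 (phi th sg))) phi_sum !mulr1; ring.
Qed.

Lemma phi_ge0 th sg : 0 <= phi th sg.
Proof. by case: (phi_scheme th) => H _; exact: H. Qed.

Lemma rec_points_eq C : 0 < qC k q C -> rec_points rho xi q phi rec C = Pt C.
Proof.
move=> HC; rewrite /rec_points.
have K (f : T -> R) : \sum_(th | firstk k th == C) \sum_sg q th * phi th sg * f (th (rec sg))
    = qC k q C * ((1 - t) * f (lo l C) + t * f (hi l C)).
  rewrite /qC big_distrl /=; apply: eq_bigr => th /eqP HC'.
  rewrite -{}HC' -/(loS th) -/(hiS th) -phi_rec big_distrr /=.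
  by apply: eq_bigr => sg _; rewrite mulrA.
rewrite (K rho) (K xi) /Pt.
by rewrite ![qC k q C * _ / _]mulrC !mulKf // gt_eqF.
Qed.

Definition tt (s : {perm 'I_n}) (th : state) : state := [ffun i => th (s i)].

Lemma q_tt (s : {perm 'I_n}) th : q (tt s th) = q th. Proof. exact: Hs. Qed.

Lemma tt_inj (s : {perm 'I_n}) : injective (tt s).
Proof.
move=> th1 th2 /ffunP H; apply/ffunP => i; have := H (s^-1 i)%g.
by rewrite !ffunE permKV.
Qed.

Lemma sum_tt (s : {perm 'I_n}) (F : state -> R) : \sum_th F th = \sum_th F (tt s th).
Proof. exact: reindex_inj (@tt_inj s). Qed.

Lemma firstk_tt (s : {perm 'I_n}) th : (forall i, (s i < k)%N = (i < k)%N) -> firstk k (tt s th) = firstk k th.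
Proof.
move=> Hsk; apply/setP => c; apply/imsetP/imsetP => [[i Hi ->]|[i Hi ->]].
  by exists (s i); rewrite ?ffunE // inE Hsk; rewrite inE in Hi.
exists (s^-1 i)%g; last by rewrite ffunE permKV.
by rewrite inE -Hsk permKV; rewrite inE in Hi.
Qed.

Lemma rec_tperm a b i : rec (tperm a b i) = tperm (rec a) (rec b) (rec i).
Proof.
case: (tpermP a b i) => [->|->|ha hb]; first by rewrite tpermL.
  by rewrite tpermR.
rewrite tpermD //; apply/eqP => /rec_inj e; [exact: ha|exact: hb].
Qed.

Lemma tperm_k a b i : (tperm (rec a) (rec b) i < k)%N = (i < k)%N.
Proof. by case: tpermP => [->|->|] //=; rewrite !ltn_ord. Qed.

Lemma qpos_or0 th : q th = 0 \/ 0 < q th.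
Proof. by case: (ltrgtP 0 (q th)) (q_ge0 th) => [h|h|<-] h2; [right|left; lra|left]. Qed.

Lemma ix_eq th c sg : 0 < q th -> c \in firstk k th -> (sg == ix th c) = (th (rec sg) == c).
Proof.
move=> Hq Hc; apply/eqP/eqP => [->|e]; first exact: ix_spec.
apply: rec_inj; apply: (Hinj _ Hq); by rewrite e ix_spec.
Qed.

Lemma phi_inj th sg : 0 < q th ->
  phi th sg = (1 - t) * (th (rec sg) == loS th)%:R + t * (th (rec sg) == hiS th)%:R.
Proof. by move=> Hq; rewrite /phi !ix_eq //; [exact: hiS_in | exact: loS_in]. Qed.

Lemma phi_tt a b th sg : 0 < q th ->
  phi (tt (tperm (rec a) (rec b)) th) sg = phi th (tperm a b sg).
Proof.
move=> Hq; have Hq' : 0 < q (tt (tperm (rec a) (rec b)) th) by rewrite q_tt.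
rewrite phi_inj // phi_inj // /loS /hiS firstk_tt; last exact: tperm_k.
by rewrite ffunE -rec_tperm.
Qed.

Definition N sg (j : 'I_n) := \sum_th q th * phi th sg * rho (th j).

Lemma N_perm a b sg j : N sg j = N (tperm a b sg) (tperm (rec a) (rec b) j).
Proof.
rewrite /N (sum_tt (tperm (rec a) (rec b))); apply: eq_bigr => th _.
rewrite q_tt ffunE; case: (qpos_or0 th) => [->|Hq]; first by rewrite !mul0r.
by rewrite phi_tt.
Qed.

Lemma sumN j : \sum_sg N sg j = \sum_th q th * rho (th j).
Proof.
rewrite /N exchange_big /=; apply: eq_bigr => th _.
under eq_bigr do rewrite mulrAC.
by rewrite -big_distrr /= (proj2 (phi_scheme th)) mulr1.
Qed.

Lemma Ej j : \sum_th q th * rho (th j) = E.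
Proof.
rewrite (sum_tt (tperm j i0)) /E; apply: eq_bigr => th _.
by rewrite q_tt ffunE tpermL.
Qed.

Lemma sumA : \sum_sg N sg (rec sg) = (1 - t) * Lo l + t * Hi l.
Proof.
rewrite /N exchange_big /Lo /Hi !big_distrr -big_split /=; apply: eq_bigr => th _.
have -> : \sum_sg q th * phi th sg * rho (th (rec sg))
   = q th * \sum_sg phi th sg * rho (th (rec sg)).
  by rewrite big_distrr; apply: eq_bigr => sg _ /=; rewrite mulrA.
rewrite phi_rec /loS /hiS; ring.
Qed.

Lemma A_const sg sg' : N sg (rec sg) = N sg' (rec sg').
Proof. by rewrite (N_perm sg sg') !tpermL. Qed.

Lemma persuasive_phi : E <= (1 - t) * Lo l + t * Hi l -> persuasive rho q phi rec.
Proof.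
move=> HU sg Hp j; rewrite /condE.
apply: ler_wpM2r; first by rewrite invr_ge0 ltW.
rewrite -/(N sg j) -/(N sg (rec sg)).
set A := N sg (rec sg).
have HkA : E <= A *+ k.
  apply: (le_trans HU); rewrite -sumA (eq_bigr (fun _ => A)); last by move=> sg' _; rewrite (A_const sg' sg).
  by rewrite sumr_const card_ord.
have kp : k = k.-1.+1 by rewrite prednK // k_gt0.
case: (ltnP j k) => Hj.
  set j' : 'I_k := Ordinal Hj; have -> : j = rec j' by apply: val_inj.
  case: (eqVneq j' sg) => [->//|ne].
  have HB sg'' : sg'' != j' -> N sg'' (rec j') = N sg (rec j').
    move=> ne2; rewrite (N_perm sg'' sg) tpermL tpermD //; apply/eqP => /rec_inj e;
      by move: ne ne2; rewrite e eqxx.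
  have := sumN (rec j'); rewrite Ej (bigD1 j') //= (eq_bigr _ HB) sumr_const cardC1 card_ord.
  rewrite (A_const j' sg) -/A => HE.
  move: HkA; rewrite -HE kp mulrS lerD2l lerMn2r.
  case/orP=> // /eqP /= k1; by move: Hk; rewrite -(prednK k_gt0) k1.
have HB sg'' : N sg'' j = N sg j.
  rewrite (N_perm sg'' sg) tpermL tpermD //; apply/eqP => e; move: Hj; rewrite -e /= leqNgt ltn_ord //.
have := sumN j; rewrite Ej (eq_bigr _ (fun sg'' _ => HB sg'')) sumr_const card_ord => HE.
move: HkA; rewrite -HE lerMn2r; case/orP=> // /eqP k0; move: Hk; rewrite k0 //.
Qed.

Lemma Pt_val (C : {set T}) x : x \in C ->
  (Pt C).2 + l * (Pt C).1 = g l (hi l C) /\ forall c, c \in C -> g l c <= g l (hi l C).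
Proof.
move=> xC; have Hl := @lo_spec l C x xC; have Hh := @hi_spec l C x xC.
have e1 := loP_max Hl _ (hiP_in Hh); have e2 := hiP_max Hh _ (loP_in Hl).
have e : g l (lo l C) = g l (hi l C) by apply/eqP; rewrite eq_le e1 e2.
split; last exact: hiP_max Hh.
move: e; rewrite /Pt /g /= => e.
have -> : (1 - t) * xi (lo l C) + t * xi (hi l C) + l * ((1 - t) * rho (lo l C) + t * rho (hi l C))
  = (1 - t) * (xi (lo l C) + l * rho (lo l C)) + t * (xi (hi l C) + l * rho (hi l C)) by ring.
rewrite e; ring.
Qed.

Lemma conv_le (C : {set T}) x z : x \in C -> in_conv rho xi C z ->
  z.2 + l * z.1 <= (Pt C).2 + l * (Pt C).1.
Proof.
move=> xC [lam [l0 [lC [l1 ->]]]] /=.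
have [-> HM] := @Pt_val C x xC.
have -> : \sum_c lam c * xi c + l * \sum_c lam c * rho c = \sum_c lam c * g l c.
  by rewrite big_distrr -big_split; apply: eq_bigr => c _ /=; rewrite /g; ring.
rewrite -[X in _ <= X]mul1r -l1 big_distrl /=.
apply: ler_sum => c _; case: (boolP (c \in C)) => cC.
  by apply: ler_wpM2l => //; exact: HM.
by rewrite lC // !mul0r.
Qed.

Lemma sum_indT (a : T) (F : T -> R) : \sum_c (c == a)%:R * F c = F a.
Proof.
rewrite (bigD1 a) //= eqxx mul1r big1 ?addr0 // => i /negbTE ->.
by rewrite mul0r.
Qed.

Lemma Pt_conv (C : {set T}) x : x \in C -> in_conv rho xi C (Pt C).
Proof.
move=> xC; have Hl := loP_in (@lo_spec l C x xC); have Hh := hiP_in (@hi_spec l C x xC).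
exists (fun c => (1 - t) * (c == lo l C)%:R + t * (c == hi l C)%:R); split.
  by move=> c; apply: addr_ge0; apply: mulr_ge0 => //; rewrite subr_ge0.
split.
  move=> c cC; have /negbTE -> : c != lo l C by apply: contraNneq cC => ->.
  have /negbTE -> : c != hi l C by apply: contraNneq cC => ->.
  by rewrite /= !mulr0 addr0.
have S (F : T -> R) : \sum_c ((1 - t) * (c == lo l C)%:R + t * (c == hi l C)%:R) * F c
    = (1 - t) * F (lo l C) + t * F (hi l C).
  under eq_bigr do rewrite mulrDl -!mulrA.
  by rewrite big_split /= -!big_distrr /= !sum_indT.
split.
  by rewrite -(eq_bigr _ (fun c _ => mulr1 _)) S; ring.
by rewrite !S.
Qed.

Lemma qC_pos_th (C : {set T}) : 0 < qC k q C -> exists th : state, firstk k th = C.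
Proof.
rewrite /qC; case: (pickP (fun th : state => firstk k th == C)) => [th /eqP <-|H]; first by exists th.
by rewrite big_pred0 // ltxx.
Qed.

Lemma uS_Pt : \sum_(C | 0 < qC k q C) qC k q C * (Pt C).2 = \sum_th q th * (Pt (firstk k th)).2.
Proof. exact: sumC. Qed.

Lemma U_Pt : \sum_th q th * (Pt (firstk k th)).1 = (1 - t) * Lo l + t * Hi l.
Proof. rewrite /Lo /Hi !big_distrr -big_split /=; apply: eq_bigr => th _; ring. Qed.

End Scheme.

Lemma Psig_condE (ph : state -> 'I_k -> R) sg (f : state -> R) :
  (forall th, 0 <= ph th sg) ->
  Psig q ph sg * condE q ph sg f = \sum_th q th * ph th sg * f th.
Proof.
move=> Hph; rewrite /condE; have [P0|P0] := eqVneq (Psig q ph sg) 0.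
  rewrite P0 mul0r; symmetry; apply: big1 => th _.
  have H0 : forall th, predT th -> 0 <= q th * ph th sg.
    by move=> th' _; apply: mulr_ge0 => //; exact: q_ge0.
  by rewrite (@psumr_eq0P R _ predT (fun th => q th * ph th sg) H0 P0 th isT) mul0r.
by rewrite mulrC divfK.
Qed.

Lemma rb_exists (ph : state -> 'I_k -> R) : exists a, receiver_best rho xi q ph a.
Proof.
pose cr sg (j : 'I_n) := condE q ph sg (fun th => rho (th j)).
pose cx sg (j : 'I_n) := condE q ph sg (fun th => xi (th j)).
pose P sg c := [forall d, cr sg d <= cr sg c] &&
   [forall d, [forall e, cr sg e <= cr sg d] ==> (cx sg d <= cx sg c)].
have ex sg : exists c, P sg c.
  have [c1 [_ H1]] := @ex_max R _ predT (cr sg) i0 isT.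
  have Pc1 : cr sg c1 == cr sg c1 by [].
  have [c2 [/eqP e2 H2]] := @ex_max R _ (fun d => cr sg d == cr sg c1) (cx sg) c1 Pc1.
  exists c2; apply/andP; split.
    by apply/forallP => d; rewrite e2; exact: H1.
  apply/forallP => d; apply/implyP => /forallP Hdd; apply: H2.
  by rewrite eq_le H1 //= -e2 Hdd.
exists (fun sg => odflt i0 [pick c | P sg c]) => sg.
have : P sg (odflt i0 [pick c | P sg c]).
  case: pickP => [c //|H]; have [c Pc] := ex sg; by have := H c; rewrite Pc.
case/andP=> /forallP H1 /forallP H2; split; first exact: H1.
move=> j Hj; have := H2 j; rewrite (_ : [forall e, _] = true) //.
by apply/forallP.
Qed.

Lemma perm_into_set m (A : {set 'I_n}) : #|[set x in A | (k <= x)%N]| = m -> (#|A| <= k)%N ->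
  exists p : {perm 'I_n}, forall x, x \in A -> (p x < k)%N.
Proof.
elim: m A => [|m IH] A HA HAk.
  exists 1%g => x xA; rewrite perm1 ltnNge; apply/negP => kx.
  move/eqP: HA; rewrite cards_eq0 => /eqP HA.
  have : x \in [set x in A | (k <= x)%N] by rewrite inE xA kx.
  by rewrite HA inE.
have : (0 < #|[set x in A | (k <= x)%N]|)%N by rewrite HA.
case/card_gt0P => x; rewrite inE => /andP[xA kx].
have [y yk yA] : exists2 y : 'I_n, (y < k)%N & y \notin A.
  case: (boolP [exists i : 'I_k, rec i \notin A]) => [/existsP[i Hi]|].
    by exists (rec i) => //; rewrite /= ltn_ord.
  rewrite negb_exists => /forallP Hall.
  have sub : [set rec i | i : 'I_k] \subset A :\ x.
    apply/subsetP => z /imsetP[i _ ->]; rewrite !inE.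
    have := Hall i; rewrite negbK => ->; rewrite andbT.
    apply/eqP => e; move: kx; rewrite -e /= leqNgt ltn_ord //.
  have := subset_leq_card sub; rewrite card_imset; last exact: rec_inj.
  rewrite card_ord; move: HAk; rewrite (cardsD1 x A) xA /=.
  by move=> h1 h2; have := leq_trans h1 h2; rewrite add1n ltnn.
pose tau := tperm x y.
have memA z : (z \in tau @: A) = (tau z \in A).
  apply/imsetP/idP => [[w wA ->]|zA]; first by rewrite tpermK.
  by exists (tau z); rewrite // tpermK.
have HA' : #|[set z in tau @: A | (k <= z)%N]| = m.
  have -> : [set z in tau @: A | (k <= z)%N] = [set z in A | (k <= z)%N] :\ x.
    apply/setP => z; rewrite !inE memA.
    case: (tpermP x y z) => [->|->|h1 h2].
    - by rewrite eqxx (negbTE yA).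
    - rewrite (leqNgt k y) yk !andbF //.
    - by rewrite (introF eqP h1).
  have := cardsD1 x [set z in A | (k <= z)%N]; rewrite inE xA kx HA /= add1n.
  by case=> ->.
have HAk' : (#|tau @: A| <= k)%N by rewrite card_imset //; exact: perm_inj.
have [p' Hp'] := IH _ HA' HAk'.
exists (tau * p')%g => z zA; rewrite permM; apply: Hp'.
by rewrite memA tpermK.
Qed.

Lemma perm_into (a : 'I_k -> 'I_n) : exists p : {perm 'I_n}, forall sg, (p (a sg) < k)%N.
Proof.
have [p Hp] := @perm_into_set _ [set a sg | sg in 'I_k] erefl
  (leq_trans (leq_imset_card _ _) (eq_leq (card_ord k))).
by exists p => sg; apply: Hp; apply: imset_f.
Qed.

Section Final.
Variables (l t : R).
Hypotheses (l_ge0 : 0 <= l) (t_ge0 : 0 <= t) (t_le1 : t <= 1).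
Hypotheses (HEU : E <= (1 - t) * Lo l + t * Hi l) (HL : l * ((1 - t) * Lo l + t * Hi l - E) = 0).

Definition G (th : state) := (Pt l t (firstk k th)).2 + l * (Pt l t (firstk k th)).1.

Lemma sumG : \sum_th q th * G th - l * E = \sum_th q th * (Pt l t (firstk k th)).2.
Proof.
have -> : \sum_th q th * G th = \sum_th q th * (Pt l t (firstk k th)).2
   + l * \sum_th q th * (Pt l t (firstk k th)).1.
  by rewrite big_distrr -big_split /=; apply: eq_bigr => th _; rewrite /G /Pt /=; ring.
rewrite U_Pt; move: HL; lra.
Qed.

Lemma upper (ph : state -> 'I_k -> R) (a : 'I_k -> 'I_n) : is_scheme ph -> receiver_best rho xi q ph a ->
  uS_scheme xi q ph a <= \sum_th q th * (Pt l t (firstk k th)).2.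
Proof.
move=> Hph Hrb.
have Hph0 th sg : 0 <= ph th sg by case: (Hph th) => H _; exact: H.
have Hsum th : \sum_sg ph th sg = 1 by case: (Hph th).
have PC sg (f : state -> R) : Psig q ph sg * condE q ph sg f = \sum_th q th * ph th sg * f th.
  by apply: Psig_condE => th; exact: Hph0.
rewrite /uS_scheme (eq_bigr _ (fun sg _ => PC sg _)).
set Y := \sum_sg _.
set X := \sum_sg \sum_th q th * ph th sg * rho (th (a sg)).
have HX : E <= X.
  have -> : E = \sum_sg \sum_th q th * ph th sg * rho (th i0).
    rewrite exchange_big /E; apply: eq_bigr => th _.
    rewrite -[LHS]mulr1 -(Hsum th) !big_distrr; apply: eq_bigr => sg _ /=; ring.
  apply: ler_sum => sg _; rewrite -!PC; apply: ler_wpM2l.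
    by apply: sumr_ge0 => th _; apply: mulr_ge0; [exact: q_ge0 | exact: Hph0].
  exact: (proj1 (Hrb sg)).
have [p Hp] := perm_into a.
pose s := (p^-1)%g.
have key th : \sum_sg ph th sg * g l (th (a sg)) <= G (tt s th).
  rewrite -[G _]mul1r -(Hsum th) big_distrl /=; apply: ler_sum => sg _.
  apply: ler_wpM2l => //.
  have xin : th (a sg) \in firstk k (tt s th).
    apply/imsetP; exists (p (a sg)); first by rewrite inE Hp.
    by rewrite ffunE /s permK.
  have [e1 e2] := @Pt_val l t _ _ xin; rewrite /G e1; exact: e2.
have HG : \sum_th q th * G (tt s th) = \sum_th q th * G th.
  by rewrite [RHS](sum_tt s); apply: eq_bigr => th _; rewrite q_tt.
have E1 : Y + l * X = \sum_th q th * \sum_sg ph th sg * g l (th (a sg)).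
  rewrite /Y /X big_distrr -big_split /=; symmetry.
  under eq_bigr do rewrite big_distrr.
  rewrite exchange_big /=; apply: eq_bigr => sg _.
  rewrite big_distrr -big_split /=; apply: eq_bigr => th _ /=.
  rewrite /g; ring.
have E2 : \sum_th q th * \sum_sg ph th sg * g l (th (a sg)) <= \sum_th q th * G th.
  rewrite -HG; apply: ler_sum => th _; apply: ler_wpM2l; [exact: q_ge0 | exact: key].
rewrite -sumG.
have : 0 <= l * (X - E) by apply: mulr_ge0; rewrite ?subr_ge0.
move: E1 E2; lra.
Qed.

Lemma lower (a : 'I_k -> 'I_n) : receiver_best rho xi q (phi l t) a ->
  \sum_th q th * (Pt l t (firstk k th)).2 <= uS_scheme xi q (phi l t) a.
Proof.
move=> Hrb.
have PC sg (f : state -> R) : Psig q (phi l t) sg * condE q (phi l t) sg f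
    = \sum_th q th * phi l t th sg * f th.
  by apply: Psig_condE => th; exact: phi_ge0.
have -> : \sum_th q th * (Pt l t (firstk k th)).2
    = \sum_sg \sum_th q th * phi l t th sg * xi (th (rec sg)).
  rewrite exchange_big; apply: eq_bigr => th _ /=.
  have -> : \sum_sg q th * phi l t th sg * xi (th (rec sg))
     = q th * \sum_sg phi l t th sg * xi (th (rec sg)).
    by rewrite big_distrr; apply: eq_bigr => sg _ /=; rewrite mulrA.
  by rewrite phi_rec.
rewrite /uS_scheme; apply: ler_sum => sg _.
rewrite -PC.
have Pge : 0 <= Psig q (phi l t) sg.
  by apply: sumr_ge0 => th _; apply: mulr_ge0; [exact: q_ge0 | exact: phi_ge0].
case: (ltrgtP 0 (Psig q (phi l t) sg)) Pge => [Pp|Pn|P0] Pge; last by rewrite -P0 !mul0r.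
  apply: ler_wpM2l; first exact: ltW.
  apply: (proj2 (Hrb sg)).
  exact: (@persuasive_phi l t t_ge0 t_le1 HEU sg Pp).
by move: Pn Pge; lra.
Qed.

End Final.

Lemma main_result :
  exists s : option R, slope_ok s /\
  exists (phi : {ffun 'I_n -> T} -> 'I_k -> R) (rec : 'I_k -> 'I_n),
    optimal_scheme rho xi q phi /\
    (forall sg, (rec sg < k)%N) /\
    persuasive rho q phi rec /\
    s_pareto k rho xi q s (rec_points rho xi q phi rec) /\
    (forall (s' : option R) (P' : {set T} -> R * R),
       slope_ok s' -> s_pareto k rho xi q s' P' ->
       uS_pc k q P' <= uS_pc k q (rec_points rho xi q phi rec)).
Proof.
have [l [t [lge tge tle HEU HL]]] := exists_lt.
have uSrp : uS_pc k q (rec_points rho xi q (phi l t) rec) = \sum_th q th * (Pt l t (firstk k th)).2.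
  rewrite /uS_pc -uS_Pt; apply: eq_bigr => C HC; by rewrite rec_points_eq.
have uRrp : uR_pc k q (rec_points rho xi q (phi l t) rec) = (1 - t) * Lo l + t * Hi l.
  rewrite /uR_pc -U_Pt -(sumC (fun C => (Pt l t C).1)); apply: eq_bigr => C HC; by rewrite rec_points_eq.
exists (Some (- l)); split; first by rewrite /= oppr_le0.
exists (phi l t), rec; split.
  split; first exact: phi_scheme.
  have [a Ha] := rb_exists (phi l t); exists a; split=> // ph' a' Hs' Hrb'.
  apply: le_trans (@upper l t lge HL ph' a' Hs' Hrb') _.
  exact: lower.
split; first by move=> sg; rewrite /= ltn_ord.
split; first exact: persuasive_phi.
split.
  split.
    move=> C HC; rewrite rec_points_eq //; have [th <-] := @qC_pos_th C HC.
    exact: Pt_conv (i0_in th).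
  split.
    move=> C HC; rewrite rec_points_eq //; have [th eC] := @qC_pos_th C HC.
    have xC : th i0 \in C by rewrite -eC; exact: i0_in.
    split; first exact: Pt_conv xC.
    move=> z Hz /=; rewrite !mulNr !opprK; exact: conv_le xC Hz.
  by move=> i; rewrite Ej uRrp.
move=> s' P' _ [Hpc [_ Hge]].
rewrite uSrp -(@sumG l t HL).
have HuR := Hge i0; rewrite -/E in HuR.
have : uS_pc k q P' + l * uR_pc k q P' <= \sum_th q th * G l t th.
  rewrite /uS_pc /uR_pc big_distrr -big_split /= /G.
  rewrite -(sumC (fun C => (Pt l t C).2 + l * (Pt l t C).1)).
  apply: ler_sum => C HC; have [th eC] := @qC_pos_th C HC.
  have xC : th i0 \in C by rewrite -eC; exact: i0_in.
  have := @conv_le l t C _ _ xC (Hpc C HC).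
  have := qC_ge0 C.
  move=> h1 h2; have := ler_wpM2l h1 h2.
  by move=> h3; apply: le_trans _ h3; rewrite mulrDr mulrCA.
have : l * E <= l * uR_pc k q P' by apply: ler_wpM2l.
lra.
Qed.

End Main.

Theorem theorem3p1 (R : realType) (T : finType) (n k : nat) (rho xi : T -> R)
  (q : {ffun 'I_n -> T} -> R) :
  (2 <= k)%N -> (k <= n)%N ->
  is_distribution q -> symmetric_q q -> distinct_types q ->
  exists s : option R, slope_ok s /\
  exists (phi : {ffun 'I_n -> T} -> 'I_k -> R) (rec : 'I_k -> 'I_n),
    optimal_scheme rho xi q phi /\
    (forall sg, (rec sg < k)%N) /\
    persuasive rho q phi rec /\
    s_pareto k rho xi q s (rec_points rho xi q phi rec) /\
    (forall (s' : option R) (P' : {set T} -> R * R),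
       slope_ok s' -> s_pareto k rho xi q s' P' ->
       uS_pc k q P' <= uS_pc k q (rec_points rho xi q phi rec)).
Proof.
move=> Hk Hkn Hd Hs Hinj.
have n0 : (0 < n)%N by apply: leq_trans Hkn; exact: leq_trans Hk.
have [th0 _] : exists th : {ffun 'I_n -> T}, true.
  case: (pickP (@predT {ffun 'I_n -> T})) => [th _|H]; first by exists th.
  case: Hd => _; rewrite big_pred0 // => /eqP; by rewrite eq_sym oner_eq0.
exact: (@main_result R T n k rho xi q Hk Hkn Hd Hs Hinj (th0 (Ordinal n0))).
Qed.
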